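(* Define $a_0 = 0$ and $a_n = \sum_{k=0}^{n-1} k!\,(n-k-1)!$ for $n \geq 1$. Then for every natural number $n$, $$a_n = (-1)^{n-1} \sum_{k=0}^{n} G_k\, s(n,k).$$
   Context: The Genocchi numbers $G_n$ ($n \in \mathbb{N}$) are defined by the exponential generating function $\frac{2x}{e^x+1} = \sum_{n=0}^{\infty} G_n \frac{x^n}{n!}$. The (signed) Stirling numbers of the first kind $s(n,k)$ ($0 \le k \le n$) are the integers defined by the polynomial identity $X(X-1)\cdots(X-n+1) = \sum_{k=0}^{n} s(n,k) X^k$. *)

(* Defs.v *)
From mathcomp Require Import all_boot all_order all_algebra.
Set Implicit Arguments. Unset Strict Implicit. Unset Printing Implicit Defensive.
Import Order.TTheory GRing.Theory Num.Theory.
Local Open Scope ring_scope.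

Definition falling_poly (n : nat) : {poly int} :=
  \prod_(i < n) ('X - (i%:R)%:P).
Definition stirling1 (n k : nat) : int := (falling_poly n)`_k.

Definition a_seq (n : nat) : nat :=
  if n is 0 then 0%N else (\sum_(k < n) k`! * (n - k - 1)`!)%N.

(* G : nat -> rat is the Genocchi sequence iff the formal power series identity
   (e^x + 1) * sum_n G_n x^n/n! = 2x holds, i.e. comparing the coefficients of
   x^n/n! on both sides:  sum_{k=0}^n C(n,k) G_k + G_n = 2 [n = 1]. *)
Definition is_genocchi (G : nat -> rat) : Prop :=
  forall n : nat,
    \sum_(k < n.+1) 'C(n, k)%:R * G k + G n = (if n == 1%N then 2 else 0).

(* Main.v *)
Require Import Defs.
From mathcomp Require Import all_boot all_order all_algebra.
Import Order.TTheory GRing.Theory Num.Theory.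
Local Open Scope ring_scope.

Lemma sum_widen {N M : nat} (f : nat -> rat) : (N <= M)%N ->
  (forall i, (N <= i)%N -> f i = 0) -> \sum_(i < M) f i = \sum_(i < N) f i.
Proof.
move=> H Hf; rewrite (big_ord_widen M f H) [RHS]big_mkcond /=.
apply: eq_bigr => i _; case: ifP => // /negbT; rewrite -leqNgt => /Hf ->//.
Qed.

Lemma coefX1 i k : (('X + 1 : {poly rat})^+i)`_k = 'C(i,k)%:R.
Proof.
rewrite exprD1n coef_sum.
under eq_bigr => j _ do rewrite coefMn coefXn.
have E : forall (b : bool) c, (b%:R : rat) *+ c = if b then c%:R else 0.
  by move=> [] c; rewrite ?mul1rn ?mul0rn.
under eq_bigr => j _ do rewrite E eq_sym.
rewrite -big_mkcond /= (big_ord1_eq _ (fun j => ('C(i,j)%:R : rat))).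
by case: ltnP => h //; rewrite bin_small.
Qed.

Definition LN (G : nat -> rat) N (p : {poly rat}) := \sum_(i < N) p`_i * G i.

Lemma key G (hG : is_genocchi G) N (p : {poly rat}) : (2 <= N)%N -> (size p <= N)%N ->
  LN G N (p \Po ('X + 1)) + LN G N p = 2 * p`_1.
Proof.
move=> HN Hp; rewrite /LN.
have C k : (p \Po ('X + 1))`_k = \sum_(i < N) p`_i * 'C(i,k)%:R.
  rewrite coef_comp_poly (sum_widen (fun i => p`_i * 'C(i,k)%:R) Hp).
    by apply: eq_bigr => i _; rewrite coefX1.
  by move=> i hi; rewrite nth_default ?mul0r.
under eq_bigr => k _ do rewrite C.
under eq_bigr => k _ do rewrite mulr_suml.
rewrite exchange_big /= -big_split /=.
have -> : 2 * p`_1 = \sum_(i < N) p`_i * (if nat_of_ord i == 1%N then 2 else 0).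
  rewrite (bigD1 (Ordinal HN)) //= mulrC big1 ?addr0 // => i /negbTE.
  by rewrite -(inj_eq val_inj) /= => ->; rewrite mulr0.
apply: eq_bigr => i _; rewrite -(hG i) mulrDr; congr (_ + _).
rewrite (@sum_widen i.+1 N (fun k => p`_i * 'C(i,k)%:R * G k)) //.
  by rewrite mulr_sumr; apply: eq_bigr => k _; rewrite mulrA.
by move=> k hk; rewrite bin_small // mulr0 mul0r.
Qed.

From mathcomp Require Import ring zify.

Definition F n : {poly rat} := \prod_(i < n) ('X - (i%:R)%:P).

Lemma F_S n : F n.+1 = F n * ('X - (n%:R)%:P).
Proof. by rewrite /F big_ord_recr. Qed.

Lemma mapF n : map_poly (intr : int -> rat) (falling_poly n) = F n.
Proof.
elim: n => [|n IH]; first by rewrite /falling_poly /F !big_ord0 rmorph1.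
rewrite F_S -IH /falling_poly big_ord_recr /= rmorphM /=; congr (_ * _).
by rewrite rmorphB /= map_polyX map_polyC /= rmorph_nat.
Qed.

Lemma stirF n k : ((stirling1 n k)%:~R : rat) = (F n)`_k.
Proof. by rewrite /stirling1 -mapF coef_map. Qed.


Lemma F_comp n : F n.+1 \Po ('X + 1) = ('X + 1) * F n.
Proof.
rewrite /F big_ord_recl comp_polyM.
rewrite (big_morph _ (comp_poly_multiplicative ('X + 1)).1 (comp_poly_multiplicative ('X + 1)).2).
rewrite comp_polyB comp_polyX comp_polyC /= subr0; congr (_ * _).
apply: eq_bigr => i _; rewrite comp_polyB comp_polyX comp_polyC /=.
by rewrite /bump /= add1n -addn1 natrD polyCD polyC1; ring.
Qed.

Lemma coefFS n k : (F n.+1)`_k = (if k == 0%N then 0 else (F n)`_k.-1) - (F n)`_k * n%:R.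
Proof. by rewrite F_S mulrBr coefB coefMX coefMC. Qed.

Lemma s0 n : (F n)`_0 = (n == 0%N)%:R.
Proof.
elim: n => [|n IH]; first by rewrite /F big_ord0 coef1.
by rewrite coefFS /= IH; case: n {IH} => [|n] /=; rewrite ?mul1r ?mul0r; ring.
Qed.

Lemma s1 n : (F n.+1)`_1 = (-1)^+n * n`!%:R.
Proof.
elim: n => [|n IH]; first by rewrite coefFS /= s0 /= mulr0 subr0 expr0 mul1r.
rewrite coefFS /= s0 /= IH factS natrM exprS; ring.
Qed.

Lemma sizeF n : (size (F n) <= n.+1)%N.
Proof.
elim: n => [|n IH]; first by rewrite /F big_ord0 size_poly1.
rewrite F_S; apply: leq_trans (size_polyMleq _ _) _.
by rewrite size_XsubC addn2 /=.
Qed.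

Lemma LN_D G N p q : LN G N (p + q) = LN G N p + LN G N q.
Proof. by rewrite /LN -big_split; apply: eq_bigr => i _; rewrite coefD mulrDl. Qed.

Lemma LN_Z G N c p : LN G N (c *: p) = c * LN G N p.
Proof. by rewrite /LN mulr_sumr; apply: eq_bigr => i _; rewrite coefZ mulrA. Qed.

Definition b G n := LN G n.+1 (F n).

Lemma LN_F G n : LN G n.+2 (F n) = b G n.
Proof.
rewrite /LN /b /LN (@sum_widen n.+1 n.+2 (fun i => (F n)`_i * G i)) //.
move=> i hi; rewrite nth_default ?mul0r //; exact: leq_trans (sizeF n) hi.
Qed.

Lemma b_rec G (hG : is_genocchi G) n :
  2 * b G n.+1 + n.+1%:R * b G n = 2 * ((-1)^+n * n`!%:R).
Proof.
have K := @key G hG n.+2 (F n.+1) erefl (sizeF _).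
rewrite F_comp s1 in K; rewrite -K.
have E1 : ('X + 1) * F n = F n.+1 + (n.+1)%:R *: F n.
  rewrite F_S -mul_polyC -addn1 natrD polyCD polyC1; ring.
rewrite E1 LN_D LN_Z LN_F /b; ring.
Qed.

Lemma a_rec n : (2 * a_seq n.+1 = n.+1 * a_seq n + 2 * n`!)%N.
Proof.
case: n => [|m]; first by rewrite /a_seq big_ord1.
pose T k := (k`! * (m.+1 - k)`!)%N.
have Ha' : a_seq m.+2 = (\sum_(k < m.+2) T k)%N.
  by rewrite /a_seq; apply: eq_bigr => k _; rewrite /T; congr (_ * _`!)%N; lia.
have Ha : (m.+2 * a_seq m.+1 = \sum_(k < m.+1) (T k.+1 + T k))%N.
  rewrite /a_seq big_distrr /=; apply: eq_bigr => k _.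
  have hk := ltn_ord k.
  rewrite /T factS.
  have -> : (m.+1 - k = (m - k).+1)%N by lia.
  rewrite factS ?subSS ?subn0 ?subSS.
  have e : (m.+2 = k.+1 + (m - k).+1)%N by lia.
  rewrite {1}e; move: (k`!) ((m - k)`!) => u v; move: (m - k) => d.
  ring.
rewrite Ha' Ha big_split /=.
have e1 : (\sum_(k<m.+2) T k = T 0 + \sum_(i<m.+1) T i.+1)%N by rewrite big_ord_recl.
have e2 : (\sum_(k<m.+2) T k = \sum_(i<m.+1) T i + T m.+1)%N by rewrite big_ord_recr.
have t0 : T 0%N = (m.+1)`! by rewrite /T subn0 fact0 mul1n.
have t1 : T m.+1 = (m.+1)`! by rewrite /T subnn fact0 muln1.
clearbody T.
set A := (\sum_(i < m.+1) T i.+1)%N in e1 *.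
set B := (\sum_(i < m.+1) T i)%N in e2 *.
set S := (\sum_(k < m.+2) T k)%N in e1 e2 *.

lia.
Qed.

Lemma b_closed G (hG : is_genocchi G) n : b G n = (-1)^+n.+1 * (a_seq n)%:R.
Proof.
elim: n => [|n IH].
  have h0 := hG 0%N; rewrite big_ord1 /= bin0 mul1r in h0.
  rewrite /b /LN big_ord1 /F big_ord0 coef1 /= mul1r /a_seq mulr0.
  have : 2 * G 0%N = 0 by rewrite mulr2n mulrDl mul1r h0.
  by move/eqP; rewrite mulf_eq0 => /orP [|/eqP //]; rewrite pnatr_eq0.
have R := @b_rec G hG n; rewrite IH in R.
have A := a_rec n.
have A' : 2 * (a_seq n.+1)%:R = n.+1%:R * (a_seq n)%:R + 2 * (n`!)%:R :> rat.
  by have := congr1 (fun x => x%:R : rat) A; rewrite /= natrD !natrM.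
apply: (@mulfI _ 2); first by rewrite pnatr_eq0.
have -> : 2 * b G n.+1 = 2 * ((-1) ^+ n * (n`!)%:R) - n.+1%:R * ((-1) ^+ n.+1 * (a_seq n)%:R).
  by rewrite -R; ring.
by rewrite [RHS]mulrCA A' !exprS; ring.
Qed.

Theorem corollary2 (G : nat -> rat) (hG : is_genocchi G) (n : nat) :
  (a_seq n)%:R = (-1 : rat) ^ (n%:Z - 1)
                 * \sum_(k < n.+1) G k * (stirling1 n k)%:~R.
Proof.
have -> : \sum_(k < n.+1) G k * (stirling1 n k)%:~R = b G n.
  by rewrite /b /LN; apply: eq_bigr => k _; rewrite stirF mulrC.
rewrite (@b_closed G hG).
case: n => [|m]; first by rewrite /a_seq !mulr0.
have -> : (m.+1%:Z - 1 = m%:Z)%R by rewrite -addn1 PoszD addrK.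
rewrite -exprnP mulrA -exprD.
have -> : (m + m.+2 = (m.+1) * 2)%N by lia.
by rewrite exprM sqrr_sign mul1r.
Qed.
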